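(* Let $\Gamma$ be a flat Type $\mathcal A$ connection which is strongly linearly projectively equivalent to $\Gamma_i^0$ for some $0\le i\le 5$ (i.e. $\Gamma={}^L\Gamma_i^0$ for some real linear function $L$). Then one of the following holds: (1) $\Gamma=\Gamma_i^0$; (2) $i=1$, $\mathcal Q(\Gamma)=\mathrm{Span}\{e^{-x^1},\mathbb 1,x^2\}$, and $T(x^1,x^2)=(x^2,-x^1)$ intertwines $\Gamma$ and $\Gamma_3^0$; (3) $i=2$, $\mathcal Q(\Gamma)=\mathrm{Span}\{e^{x^1},\mathbb 1,e^{x^2+x^1}\}$, and $T(x^1,x^2)=(-x^1,x^1+x^2)$ intertwines $\Gamma$ and $\Gamma_2^0$; (4) $i=2$, $\mathcal Q(\Gamma)=\mathrm{Span}\{e^{-x^2},e^{-x^1-x^2},\mathbb 1\}$, and $T(x^1,x^2)=(x^2,-x^1-x^2)$ intertwines $\Gamma$ and $\Gamma_2^0$; (5) $i=3$, $\mathcal Q(\Gamma)=\mathrm{Span}\{e^{-x^2},x^1e^{-x^2},\mathbb 1\}$, and $T(x^1,x^2)=(-x^2,x^1)$ intertwines $\Gamma$ and $\Gamma_1^0$.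
   Context: A torsion-free connection has Christoffel symbols $\nabla_{\partial_{x^i}}\partial_{x^j}=\Gamma_{ij}^k\partial_{x^k}$; curvature $R(X,Y)Z=\nabla_X\nabla_YZ-\nabla_Y\nabla_XZ-\nabla_{[X,Y]}Z$, Ricci tensor $\rho(Y,Z)=\mathrm{Tr}(X\mapsto R(X,Y)Z)$, $\rho_s$ its symmetrization. Hessian $\mathcal H_\nabla f=(\partial_{x^i}\partial_{x^j}f-\Gamma_{ij}^k\partial_{x^k}f)dx^i\otimes dx^j$; on a surface $\mathcal Q(\Gamma)=\{f\in C^\infty(\mathbb R^2):\mathcal H_\nabla f+f\rho_s=0\}$. $\mathbb 1$ denotes the constant function $1$. For real constants, $\Gamma(a,b,c,d,e,f)$ denotes the connection on $\mathbb R^2$ with constant Christoffel symbols $\Gamma_{11}^1=a$, $\Gamma_{11}^2=b$, $\Gamma_{12}^1=\Gamma_{21}^1=c$, $\Gamma_{12}^2=\Gamma_{21}^2=d$, $\Gamma_{22}^1=e$, $\Gamma_{22}^2=f$ (Type $\mathcal A$ connections). For $g$ smooth, ${}^g\nabla_XY:=\nabla_XY+X(g)Y+Y(g)X$; for a linear function $L=a_1x^1+a_2x^2$, ${}^L\Gamma(a,b,c,d,e,f)=\Gamma(a+2a_1,b,c+a_2,d+a_1,e,f+2a_2)$; two Type $\mathcal A$ connections $\nabla,\tilde\nabla$ are strongly linearly projectively equivalent if $\tilde\nabla={}^L\nabla$ for some such $L$. ''$T$ intertwines $\Gamma$ and $\Gamma'$'' means $T^*\Gamma'=\Gamma$. The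 flat connections: $\Gamma_0^0=\Gamma(0,0,0,0,0,0)$, $\Gamma_1^0=\Gamma(1,0,0,1,0,0)$, $\Gamma_2^0=\Gamma(-1,0,0,0,0,1)$, $\Gamma_3^0=\Gamma(0,0,0,0,0,1)$, $\Gamma_4^0=\Gamma(0,0,0,0,1,0)$, $\Gamma_5^0=\Gamma(1,0,0,1,-1,0)$. *)

(* Defs.v *)
From Stdlib Require Import Reals List.
Import ListNotations.
Open Scope R_scope.

Inductive Idx : Type := I1 | I2.

Definition sumI (F : Idx -> R) : R := F I1 + F I2.

(* Type A connection: constant Christoffel symbols Gamma(a,b,c,d,e,f). *)
Record Conn : Type := mkConn { ga : R; gb : R; gc : R; gd : R; ge : R; gf : R }.

(* chr G i j k = Gamma_{ij}^k  (symmetric in i j: torsion free). *)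
Definition chr (G : Conn) (i j k : Idx) : R :=
  match i, j, k with
  | I1, I1, I1 => ga G | I1, I1, I2 => gb G
  | I1, I2, I1 => gc G | I2, I1, I1 => gc G
  | I1, I2, I2 => gd G | I2, I1, I2 => gd G
  | I2, I2, I1 => ge G | I2, I2, I2 => gf G
  end.

(* Curvature of a connection with constant Christoffel symbols:
   R(d_i,d_j)d_k = R_{ijk}^l d_l, with
   R_{ijk}^l = Gamma_{jk}^m Gamma_{im}^l - Gamma_{ik}^m Gamma_{jm}^l
   (derivatives of constants and [d_i,d_j] vanish). *)
Definition curv (G : Conn) (i j k l : Idx) : R :=
  sumI (fun m => chr G j k m * chr G i m l - chr G i k m * chr G j m l).

Definition flat (G : Conn) : Prop := forall i j k l, curv G i j k l = 0.

Definition ricci (G : Conn) (j k : Idx) : R := sumI (fun i => curv G i j k i).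
Definition ricci_s (G : Conn) (j k : Idx) : R := (ricci G j k + ricci G k j) / 2.

(* Strong linear projective modification by L = a1 x^1 + a2 x^2. *)
Definition proj_mod (a1 a2 : R) (G : Conn) : Conn :=
  mkConn (ga G + 2 * a1) (gb G) (gc G + a2) (gd G + a1) (ge G) (gf G + 2 * a2).

Definition Gamma0 (i : nat) : Conn :=
  match i with
  | 0%nat => mkConn 0 0 0 0 0 0
  | 1%nat => mkConn 1 0 0 1 0 0
  | 2%nat => mkConn (-1) 0 0 0 0 1
  | 3%nat => mkConn 0 0 0 0 0 1
  | 4%nat => mkConn 0 0 0 0 1 0
  | _ => mkConn 1 0 0 1 (-1) 0
  end.

Definition cont2 (f : R -> R -> R) : Prop :=
  forall x y eps, 0 < eps -> exists del, 0 < del /\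
    forall x' y', Rabs (x' - x) < del -> Rabs (y' - y) < del ->
      Rabs (f x' y' - f x y) < eps.

(* D is the family of all iterated partial derivatives of f:
   D [] = f, D (i :: w) = d/dx^i (D w), all continuous. *)
Definition smooth_family (f : R -> R -> R) (D : list Idx -> R -> R -> R) : Prop :=
  D [] = f /\
  forall w, cont2 (D w) /\
    forall x y, derivable_pt_lim (fun t => D w t y) x (D (I1 :: w) x y) /\
                derivable_pt_lim (fun t => D w x t) y (D (I2 :: w) x y).

Definition smooth2 (f : R -> R -> R) : Prop := exists D, smooth_family f D.

Definition inQ (G : Conn) (f : R -> R -> R) : Prop :=
  exists D, smooth_family f D /\
    forall x y i j,
      D [i; j] x y - sumI (fun k => chr G i j k * D [k] x y)
      + f x y * ricci_s G i j = 0.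

Definition Q_is_span3 (G : Conn) (f1 f2 f3 : R -> R -> R) : Prop :=
  forall f, inQ G f <->
    exists c1 c2 c3, forall x y, f x y = c1 * f1 x y + c2 * f2 x y + c3 * f3 x y.

(* Linear map T(x)^m = sum_k A m k x^k; A is its (constant) Jacobian.
   T^* G' = G means  T_*(nabla_{d_i} d_j) = nabla'_{T_* d_i} T_* d_j, i.e.
   sum_l Gamma_{ij}^l A_{ml} = sum_{a,b} A_{ai} A_{bj} Gamma'_{ab}^m. *)
Definition intertwines (A : Idx -> Idx -> R) (G G' : Conn) : Prop :=
  forall i j m,
    sumI (fun l => chr G i j l * A m l) =
    sumI (fun a => sumI (fun b => A a i * A b j * chr G' a b m)).

Definition mat (a11 a12 a21 a22 : R) (m k : Idx) : R :=
  match m, k with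
  | I1, I1 => a11 | I1, I2 => a12 | I2, I1 => a21 | I2, I2 => a22 end.

(* Main.v *)
From Coquelicot Require Import Coquelicot.
Require Import Defs.
From Stdlib Require Import Reals Lra Lia List FunctionalExtensionality.
Import ListNotations.
Open Scope R_scope.

Lemma cont2_coq (f : R -> R -> R) :
  (forall x y, continuous (fun p : R * R => f (fst p) (snd p)) (x, y)) -> cont2 f.
Proof.
  intros H x y eps Heps.
  specialize (H x y (fun z => Rabs (z - f x y) < eps)).
  destruct H as [d Hd].
  - exists (mkposreal eps Heps). intros z Hz. exact Hz.
  - exists d. split. apply cond_pos. intros x' y' H1 H2.
    apply (Hd (x', y')). split; [exact H1 | exact H2].
Qed.

Definition ccont (f : R -> R -> R) : Prop :=
  forall x y, continuous (fun p : R * R => f (fst p) (snd p)) (x, y).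

Lemma ccont_plus f g : ccont f -> ccont g -> ccont (fun x y => f x y + g x y).
Proof. intros Hf Hg x y. apply (continuous_plus (fun p : R*R => f (fst p) (snd p)) (fun p : R*R => g (fst p) (snd p))); auto. Qed.

Lemma ccont_mult f g : ccont f -> ccont g -> ccont (fun x y => f x y * g x y).
Proof. intros Hf Hg x y. apply (continuous_mult (fun p : R*R => f (fst p) (snd p)) (fun p : R*R => g (fst p) (snd p))); auto. Qed.

Lemma ccont_const c : ccont (fun _ _ => c).
Proof. intros x y. apply continuous_const. Qed.

Lemma ccont_x : ccont (fun x _ => x).
Proof. intros x y. apply continuous_fst. Qed.

Lemma ccont_y : ccont (fun _ y => y).
Proof. intros x y. apply continuous_snd. Qed.

Lemma ccont_exp f : ccont f -> ccont (fun x y => exp (f x y)).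
Proof. intros Hf x y. apply (continuous_comp (fun p : R*R => f (fst p) (snd p)) exp); auto.
  apply continuity_pt_filterlim. apply derivable_continuous_pt. apply derivable_pt_exp. Qed.

Lemma ccont_cont2 f : ccont f -> cont2 f.
Proof. apply cont2_coq. Qed.

Definition family_ok (D : list Idx -> R -> R -> R) : Prop :=
  forall w, ccont (D w) /\ forall x y,
    derivable_pt_lim (fun t => D w t y) x (D (I1 :: w) x y) /\
    derivable_pt_lim (fun t => D w x t) y (D (I2 :: w) x y).

Lemma family_smooth f D : family_ok D -> D [] = f -> smooth_family f D.
Proof. intros H E. split. exact E. intros w. destruct (H w) as [H1 H2]. split.
  apply ccont_cont2; auto. exact H2. Qed.

Definition lin3 (c1 c2 c3 : R) (D1 D2 D3 : list Idx -> R -> R -> R) :=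
  fun w x y => c1 * D1 w x y + c2 * D2 w x y + c3 * D3 w x y.

Lemma lin3_ok c1 c2 c3 D1 D2 D3 : family_ok D1 -> family_ok D2 -> family_ok D3 ->
  family_ok (lin3 c1 c2 c3 D1 D2 D3).
Proof.
  intros H1 H2 H3 w. destruct (H1 w) as [C1 E1]. destruct (H2 w) as [C2 E2].
  destruct (H3 w) as [C3 E3]. unfold lin3. split.
  - repeat apply ccont_plus; apply ccont_mult; auto; apply ccont_const.
  - intros x y. destruct (E1 x y) as [A1 B1]. destruct (E2 x y) as [A2 B2].
    destruct (E3 x y) as [A3 B3]. split.
    + repeat apply derivable_pt_lim_plus; apply derivable_pt_lim_scal; auto.
    + repeat apply derivable_pt_lim_plus; apply derivable_pt_lim_scal; auto.
Qed.

Definition sel (a b : R) (i : Idx) : R := match i with I1 => a | I2 => b end.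
Definition coef (a b : R) (w : list Idx) : R := fold_right (fun i r => sel a b i * r) 1 w.

Fixpoint cnt1 (w : list Idx) : nat := match w with [] => 0%nat | I1 :: w' => S (cnt1 w') | I2 :: w' => cnt1 w' end.
Fixpoint cnt2 (w : list Idx) : nat := match w with [] => 0%nat | I2 :: w' => S (cnt2 w') | I1 :: w' => cnt2 w' end.

Definition ED (a b : R) (w : list Idx) (x y : R) : R := coef a b w * exp (a * x + b * y).

Lemma ED_ok a b : family_ok (ED a b).
Proof.
  intros w. split.
  - unfold ED. apply ccont_mult. apply ccont_const. apply ccont_exp.
    apply ccont_plus; apply ccont_mult; try apply ccont_const. apply ccont_x. apply ccont_y.
  - intros x y. unfold ED. split; apply is_derive_Reals; auto_derive; auto; simpl; ring.
Qed.

Definition xh (n : nat) (x : R) : R := match n with 0%nat => x | 1%nat => 1 | _ => 0 end.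

Lemma xh_der n x : derivable_pt_lim (xh n) x (xh (S n) x).
Proof. destruct n as [|[|n]]; simpl.
  - apply derivable_pt_lim_id.
  - apply derivable_pt_lim_const.
  - apply derivable_pt_lim_const. Qed.

Lemma ccont_xh n : ccont (fun x _ => xh n x).
Proof. destruct n as [|[|n]]; simpl. apply ccont_x. apply ccont_const. apply ccont_const. Qed.

Definition YD (w : list Idx) (x y : R) : R :=
  match cnt1 w with 0%nat => xh (cnt2 w) y | _ => 0 end.

Lemma YD_ok : family_ok YD.
Proof.
  intros w. unfold YD. split.
  - destruct (cnt1 w). destruct (cnt2 w) as [|[|n]]; simpl. apply ccont_y. apply ccont_const. apply ccont_const.
    apply ccont_const.
  - intros x y. simpl. split.
    + destruct (cnt1 w); apply derivable_pt_lim_const.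
    + destruct (cnt1 w). apply xh_der. apply derivable_pt_lim_const.
Qed.

Definition XED (w : list Idx) (x y : R) : R := xh (cnt1 w) x * coef 1 (-1) w * exp (- y).

Lemma XED_ok : family_ok XED.
Proof.
  intros w. unfold XED. split.
  - apply ccont_mult. apply ccont_mult. apply ccont_xh. apply ccont_const.
    apply ccont_exp. intros x y. apply (continuous_opp (fun p : R*R => snd p)). apply continuous_snd.
  - intros x y. change (cnt1 (I1::w)) with (S (cnt1 w)). change (cnt1 (I2::w)) with (cnt1 w).
    change (coef 1 (-1) (I1::w)) with (1 * coef 1 (-1) w).
    change (coef 1 (-1) (I2::w)) with (-1 * coef 1 (-1) w). split.
    + assert (Hd := xh_der (cnt1 w) x). apply is_derive_Reals in Hd. apply is_derive_Reals.
      apply (is_derive_ext (fun t => (coef 1 (-1) w * exp (-y)) * xh (cnt1 w) t)).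
      intros; simpl; ring.
      replace (xh (S (cnt1 w)) x * (1 * coef 1 (-1) w) * exp (- y)) with
        ((coef 1 (-1) w * exp (-y)) * xh (S (cnt1 w)) x) by ring.
      apply (is_derive_scal (xh (cnt1 w)) x _ _ Hd).
    + apply is_derive_Reals. auto_derive; auto. ring.
Qed.

Lemma const1 (h : R -> R) : (forall t, derivable_pt_lim h t 0) -> forall a b, h a = h b.
Proof.
  intros H a b.
  assert (pr : derivable h) by (intro t; exists 0; apply H).
  apply (null_derivative_1 h pr). intro t.
  apply derive_pt_eq_0. apply H.
Qed.

Lemma const2 (u : R -> R -> R) :
  (forall x y, derivable_pt_lim (fun t => u t y) x 0) ->
  (forall x y, derivable_pt_lim (fun t => u x t) y 0) ->
  forall x y, u x y = u 0 0.
Proof.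
  intros H1 H2 x y.
  rewrite (const1 (fun t => u t y) (fun t => H1 t y) x 0).
  apply (const1 (fun t => u 0 t) (fun t => H2 0 t) y 0).
Qed.

Lemma master (u U p q : R -> R -> R) (a b : R) :
  (forall x y, derivable_pt_lim (fun t => u t y) x (a * u x y + p x y)) ->
  (forall x y, derivable_pt_lim (fun t => u x t) y (b * u x y + q x y)) ->
  (forall x y, derivable_pt_lim (fun t => U t y) x (a * U x y + p x y)) ->
  (forall x y, derivable_pt_lim (fun t => U x t) y (b * U x y + q x y)) ->
  forall x y, u x y = (u 0 0 - U 0 0) * exp (a * x + b * y) + U x y.
Proof.
  intros Hu1 Hu2 HU1 HU2.
  set (w := fun x y => (u x y - U x y) * exp (- (a * x + b * y))).
  assert (C : forall x y, w x y = w 0 0).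
  { apply const2; intros x y; unfold w; apply is_derive_Reals.
    - specialize (Hu1 x y). specialize (HU1 x y). apply is_derive_Reals in Hu1. apply is_derive_Reals in HU1.
      evar (l : R). replace 0 with l. apply (is_derive_mult (fun t => u t y - U t y) (fun t => exp (- (a * t + b * y)))).
      apply (is_derive_minus (fun t => u t y) (fun t => U t y)); eassumption.
      auto_derive; auto. intros; apply Rmult_comm. unfold l. simpl. unfold minus, plus, opp, mult; simpl. ring.
    - specialize (Hu2 x y). specialize (HU2 x y). apply is_derive_Reals in Hu2. apply is_derive_Reals in HU2.
      evar (l : R). replace 0 with l. apply (is_derive_mult (fun t => u x t - U x t) (fun t => exp (- (a * x + b * t)))).
      apply (is_derive_minus (fun t => u x t) (fun t => U x t)); eassumption.
      auto_derive; auto. intros; apply Rmult_comm. unfold l. simpl. unfold minus, plus, opp, mult; simpl. ring. }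
  intros x y. specialize (C x y). unfold w in C.
  replace (a * 0 + b * 0) with 0 in C by ring. rewrite Ropp_0, exp_0, Rmult_1_r in C.
  rewrite <- C. rewrite Rmult_assoc, <- exp_plus.
  replace (- (a * x + b * y) + (a * x + b * y)) with 0 by ring. rewrite exp_0. ring.
Qed.

Lemma dpl (h : R->R) x l l' : derivable_pt_lim h x l -> l = l' -> derivable_pt_lim h x l'.
Proof. intros H E; subst; exact H. Qed.

Ltac dU := intros; apply is_derive_Reals; auto_derive; auto; ring.
Ltac dZ := intros; eapply dpl; [apply derivable_pt_lim_const | ring].

Definition G2 := mkConn (-1) 0 0 0 0 0.

Lemma ric_G2 i j : ricci_s G2 i j = 0.
Proof. destruct i, j; unfold ricci_s, ricci, curv, sumI, chr, G2; simpl; field. Qed.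

Lemma Q_G2 : Q_is_span3 G2 (fun x1 x2 => exp (- x1)) (fun _ _ => 1) (fun x1 x2 => x2).
Proof.
  intros f. split.
  - intros [D [[HD0 HD] Heq]].
    assert (E : forall x y i j, D [i; j] x y = sumI (fun k => chr G2 i j k * D [k] x y)).
    { intros x y i j. specialize (Heq x y i j). rewrite ric_G2 in Heq. lra. }
    unfold sumI, chr, G2 in E; simpl in E.
    assert (Dx : forall w x y, derivable_pt_lim (fun t => D w t y) x (D (I1 :: w) x y))
      by (intros w x y; apply (proj2 (HD w))).
    assert (Dy : forall w x y, derivable_pt_lim (fun t => D w x t) y (D (I2 :: w) x y))
      by (intros w x y; apply (proj2 (HD w))).
    assert (Hg := master (D [I1]) (fun _ _ => 0) (fun _ _ => 0) (fun _ _ => 0) (-1) 0).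
    assert (Hk := master (D [I2]) (fun _ _ => 0) (fun _ _ => 0) (fun _ _ => 0) 0 0).
    set (g0 := D [I1] 0 0) in *. set (k0 := D [I2] 0 0) in *.
    lapply Hg; [clear Hg; intro Hg | intros; eapply dpl; [apply Dx | rewrite E; ring]].
    lapply Hg; [clear Hg; intro Hg | intros; eapply dpl; [apply Dy | rewrite E; ring]].
    lapply Hg; [clear Hg; intro Hg | dZ].
    lapply Hg; [clear Hg; intro Hg | dZ].
    lapply Hk; [clear Hk; intro Hk | intros; eapply dpl; [apply Dx | rewrite E; ring]].
    lapply Hk; [clear Hk; intro Hk | intros; eapply dpl; [apply Dy | rewrite E; ring]].
    lapply Hk; [clear Hk; intro Hk | dZ].
    lapply Hk; [clear Hk; intro Hk | dZ].
    assert (Hf := master (D []) (fun x y => - g0 * exp (-1 * x + 0 * y) + k0 * y)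
                  (fun x y => g0 * exp (-1 * x + 0 * y)) (fun _ _ => k0) 0 0).
    lapply Hf; [clear Hf; intro Hf | intros; eapply dpl; [apply Dx | rewrite Hg; ring]].
    lapply Hf; [clear Hf; intro Hf | intros; eapply dpl; [apply Dy | rewrite Hk; replace (0*x+0*y) with 0 by ring; rewrite exp_0; ring]].
    lapply Hf; [clear Hf; intro Hf | dU].
    lapply Hf; [clear Hf; intro Hf | dU].
    exists (- g0), (D [] 0 0 + g0), k0. intros x y. rewrite <- HD0. rewrite Hf.
    replace (-1 * 0 + 0 * 0) with 0 by ring. replace (0 * x + 0 * y) with 0 by ring.
    replace (-1 * x + 0 * y) with (- x) by ring. rewrite exp_0. ring.
  - intros [c1 [c2 [c3 Hf]]].
    exists (lin3 c1 c2 c3 (ED (-1) 0) (ED 0 0) YD). split.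
    + apply family_smooth. apply lin3_ok. apply ED_ok. apply ED_ok. apply YD_ok.
      apply functional_extensionality; intro x; apply functional_extensionality; intro y.
      rewrite Hf. unfold lin3, ED, YD; simpl.
      replace (-1 * x + 0 * y) with (- x) by ring. replace (0 * x + 0 * y) with 0 by ring.
      rewrite exp_0. ring.
    + intros x y i j. rewrite ric_G2. destruct i, j; unfold lin3, ED, YD, sumI, chr, G2; simpl; ring.
Qed.


Definition G3 := mkConn 1 0 0 1 0 1.
Definition G4 := mkConn (-1) 0 (-1) 0 0 (-1).
Definition G5 := mkConn 0 0 (-1) 0 0 (-1).

Lemma ric_G3 i j : ricci_s G3 i j = 0.
Proof. destruct i, j; unfold ricci_s, ricci, curv, sumI, chr, G3; simpl; field. Qed.
Lemma ric_G4 i j : ricci_s G4 i j = 0.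
Proof. destruct i, j; unfold ricci_s, ricci, curv, sumI, chr, G4; simpl; field. Qed.
Lemma ric_G5 i j : ricci_s G5 i j = 0.
Proof. destruct i, j; unfold ricci_s, ricci, curv, sumI, chr, G5; simpl; field. Qed.

Ltac prep G ric :=
  intros [D [[HD0 HD] Heq]];
  assert (E : forall x y i j, D [i; j] x y = sumI (fun k => chr G i j k * D [k] x y))
    by (intros x y i j; specialize (Heq x y i j); rewrite ric in Heq; lra);
  unfold sumI, chr, G in E; simpl in E;
  assert (Dx : forall w x y, derivable_pt_lim (fun t => D w t y) x (D (I1 :: w) x y))
      by (intros w x y; apply (proj2 (HD w)));
  assert (Dy : forall w x y, derivable_pt_lim (fun t => D w x t) y (D (I2 :: w) x y))
      by (intros w x y; apply (proj2 (HD w))).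

Ltac lap H t := lapply H; [clear H; intro H | t].
Ltac dXE D E := intros; eapply dpl; [apply D | rewrite E; simpl; ring].

Lemma Q_G3 : Q_is_span3 G3 (fun x1 x2 => exp x1) (fun _ _ => 1) (fun x1 x2 => exp (x2 + x1)).
Proof.
  intros f. split.
  - prep G3 ric_G3.
    assert (Hk := master (D [I2]) (fun _ _ => 0) (fun _ _ => 0) (fun _ _ => 0) 1 1).
    set (k0 := D [I2] 0 0) in *.
    lap Hk ltac:(dXE Dx E). lap Hk ltac:(dXE Dy E). lap Hk dZ. lap Hk dZ.
    assert (Hg := master (D [I1]) (fun x y => k0 * exp (1 * x + 1 * y)) (fun _ _ => 0)
       (fun x y => k0 * exp (1 * x + 1 * y)) 1 0).
    set (g0 := D [I1] 0 0) in *.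
    lap Hg ltac:(dXE Dx E). lap Hg ltac:(intros; eapply dpl; [apply Dy | rewrite E; simpl; rewrite Hk; ring]).
    lap Hg dU. lap Hg dU.
    replace (1 * 0 + 1 * 0) with 0 in Hg by ring. rewrite exp_0 in Hg.
    assert (Hf := master (D []) (fun x y => (g0 - k0) * exp (1 * x + 0 * y) + k0 * exp (1 * x + 1 * y))
       (fun x y => (g0 - k0) * exp (1 * x + 0 * y) + k0 * exp (1 * x + 1 * y))
       (fun x y => k0 * exp (1 * x + 1 * y)) 0 0).
    lap Hf ltac:(intros; eapply dpl; [apply Dx | rewrite Hg; ring]).
    lap Hf ltac:(intros; eapply dpl; [apply Dy | rewrite Hk; ring]).
    lap Hf dU. lap Hf dU.
    exists (g0 - k0), (D [] 0 0 - g0), k0. intros x y. rewrite <- HD0. rewrite Hf.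
    replace (1 * 0 + 0 * 0) with 0 by ring. replace (1 * 0 + 1 * 0) with 0 by ring.
    replace (0 * x + 0 * y) with 0 by ring.
    replace (1 * x + 0 * y) with x by ring. replace (1 * x + 1 * y) with (y + x) by ring.
    rewrite exp_0. ring.
  - intros [c1 [c2 [c3 Hf]]].
    exists (lin3 c1 c2 c3 (ED 1 0) (ED 0 0) (ED 1 1)). split.
    + apply family_smooth. apply lin3_ok; apply ED_ok.
      apply functional_extensionality; intro x; apply functional_extensionality; intro y.
      rewrite Hf. unfold lin3, ED; simpl.
      replace (1 * x + 0 * y) with x by ring. replace (0 * x + 0 * y) with 0 by ring.
      replace (1 * x + 1 * y) with (y + x) by ring.
      rewrite exp_0. ring.
    + intros x y i j. rewrite ric_G3. destruct i, j; unfold lin3, ED, sumI, chr, G3; simpl; ring.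
Qed.

Lemma Q_G4 : Q_is_span3 G4 (fun x1 x2 => exp (- x2)) (fun x1 x2 => exp (- x1 - x2)) (fun _ _ => 1).
Proof.
  intros f. split.
  - prep G4 ric_G4.
    assert (Hg := master (D [I1]) (fun _ _ => 0) (fun _ _ => 0) (fun _ _ => 0) (-1) (-1)).
    set (g0 := D [I1] 0 0) in *.
    lap Hg ltac:(dXE Dx E). lap Hg ltac:(dXE Dy E). lap Hg dZ. lap Hg dZ.
    assert (Hk := master (D [I2]) (fun x y => g0 * exp (-1 * x + -1 * y))
       (fun x y => - g0 * exp (-1 * x + -1 * y)) (fun _ _ => 0) 0 (-1)).
    set (k0 := D [I2] 0 0) in *.
    lap Hk ltac:(intros; eapply dpl; [apply Dx | rewrite E; simpl; rewrite Hg; ring]).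
    lap Hk ltac:(dXE Dy E).
    lap Hk dU. lap Hk dU.
    replace (-1 * 0 + -1 * 0) with 0 in Hk by ring. rewrite exp_0 in Hk.
    assert (Hf := master (D []) (fun x y => - g0 * exp (-1 * x + -1 * y) - (k0 - g0) * exp (0 * x + -1 * y))
       (fun x y => g0 * exp (-1 * x + -1 * y))
       (fun x y => (k0 - g0) * exp (0 * x + -1 * y) + g0 * exp (-1 * x + -1 * y)) 0 0).
    lap Hf ltac:(intros; eapply dpl; [apply Dx | rewrite Hg; ring]).
    lap Hf ltac:(intros; eapply dpl; [apply Dy | rewrite Hk; ring]).
    lap Hf dU. lap Hf dU.
    exists (- (k0 - g0)), (- g0), (D [] 0 0 + k0). intros x y. rewrite <- HD0. rewrite Hf.
    replace (-1 * 0 + -1 * 0) with 0 by ring. replace (0 * 0 + -1 * 0) with 0 by ring.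
    replace (0 * x + 0 * y) with 0 by ring.
    replace (-1 * x + -1 * y) with (- x - y) by ring. replace (0 * x + -1 * y) with (- y) by ring.
    rewrite exp_0. ring.
  - intros [c1 [c2 [c3 Hf]]].
    exists (lin3 c1 c2 c3 (ED 0 (-1)) (ED (-1) (-1)) (ED 0 0)). split.
    + apply family_smooth. apply lin3_ok; apply ED_ok.
      apply functional_extensionality; intro x; apply functional_extensionality; intro y.
      rewrite Hf. unfold lin3, ED; simpl.
      replace (-1 * x + -1 * y) with (- x - y) by ring. replace (0 * x + -1 * y) with (- y) by ring.
      replace (0 * x + 0 * y) with 0 by ring.
      rewrite exp_0. ring.
    + intros x y i j. rewrite ric_G4. destruct i, j; unfold lin3, ED, sumI, chr, G4; simpl; ring.
Qed.

Lemma Q_G5 : Q_is_span3 G5 (fun x1 x2 => exp (- x2)) (fun x1 x2 => x1 * exp (- x2)) (fun _ _ => 1).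
Proof.
  intros f. split.
  - prep G5 ric_G5.
    assert (Hg := master (D [I1]) (fun _ _ => 0) (fun _ _ => 0) (fun _ _ => 0) 0 (-1)).
    set (g0 := D [I1] 0 0) in *.
    lap Hg ltac:(dXE Dx E). lap Hg ltac:(dXE Dy E). lap Hg dZ. lap Hg dZ.
    assert (Hk := master (D [I2]) (fun x y => - g0 * x * exp (0 * x + -1 * y))
       (fun x y => - g0 * exp (0 * x + -1 * y)) (fun _ _ => 0) 0 (-1)).
    set (k0 := D [I2] 0 0) in *.
    lap Hk ltac:(intros; eapply dpl; [apply Dx | rewrite E; simpl; rewrite Hg; ring]).
    lap Hk ltac:(dXE Dy E).
    lap Hk dU. lap Hk dU.
    assert (Hf := master (D []) (fun x y => g0 * x * exp (0 * x + -1 * y) - k0 * exp (0 * x + -1 * y))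
       (fun x y => g0 * exp (0 * x + -1 * y))
       (fun x y => k0 * exp (0 * x + -1 * y) - g0 * x * exp (0 * x + -1 * y)) 0 0).
    lap Hf ltac:(intros; eapply dpl; [apply Dx | rewrite Hg; ring]).
    lap Hf ltac:(intros; eapply dpl; [apply Dy | rewrite Hk; ring]).
    lap Hf dU. lap Hf dU.
    exists (- k0), g0, (D [] 0 0 + k0). intros x y. rewrite <- HD0. rewrite Hf.
    replace (0 * 0 + -1 * 0) with 0 by ring.
    replace (0 * x + 0 * y) with 0 by ring.
    replace (0 * x + -1 * y) with (- y) by ring.
    rewrite exp_0. ring.
  - intros [c1 [c2 [c3 Hf]]].
    exists (lin3 c1 c2 c3 (ED 0 (-1)) XED (ED 0 0)). split.
    + apply family_smooth. apply lin3_ok. apply ED_ok. apply XED_ok. apply ED_ok.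
      apply functional_extensionality; intro x; apply functional_extensionality; intro y.
      rewrite Hf. unfold lin3, ED, XED; simpl.
      replace (0 * x + -1 * y) with (- y) by ring.
      replace (0 * x + 0 * y) with 0 by ring.
      rewrite exp_0. ring.
    + intros x y i j. rewrite ric_G5. destruct i, j; unfold lin3, ED, XED, sumI, chr, G5; simpl; ring.
Qed.

Lemma flat_eqs G : flat G ->
  gd G * gc G - gb G * ge G = 0 /\
  gc G * gb G + gd G * gd G - ga G * gd G - gb G * gf G = 0 /\
  ge G * ga G + gf G * gc G - gc G * gc G - gd G * ge G = 0.
Proof.
  intros H.
  pose proof (H I1 I2 I1 I1) as E1. pose proof (H I1 I2 I1 I2) as E2. pose proof (H I1 I2 I2 I1) as E3.
  unfold curv, sumI, chr in E1, E2, E3. simpl in E1, E2, E3. repeat split; lra.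
Qed.

Lemma int_tac A G G' : (forall i j m, sumI (fun l => chr G i j l * A m l) =
    sumI (fun a => sumI (fun b => A a i * A b j * chr G' a b m))) -> intertwines A G G'.
Proof. auto. Qed.

Theorem theorem3p3 (G : Conn) (i : nat) (a1 a2 : R) :
  (i <= 5)%nat ->
  flat G ->
  G = proj_mod a1 a2 (Gamma0 i) ->
  G = Gamma0 i
  \/ (i = 1%nat /\
      Q_is_span3 G (fun x1 x2 => exp (- x1)) (fun _ _ => 1) (fun x1 x2 => x2) /\
      intertwines (mat 0 1 (-1) 0) G (Gamma0 3))
  \/ (i = 2%nat /\
      Q_is_span3 G (fun x1 x2 => exp x1) (fun _ _ => 1) (fun x1 x2 => exp (x2 + x1)) /\
      intertwines (mat (-1) 0 1 1) G (Gamma0 2))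
  \/ (i = 2%nat /\
      Q_is_span3 G (fun x1 x2 => exp (- x2)) (fun x1 x2 => exp (- x1 - x2)) (fun _ _ => 1) /\
      intertwines (mat 0 1 (-1) (-1)) G (Gamma0 2))
  \/ (i = 3%nat /\
      Q_is_span3 G (fun x1 x2 => exp (- x2)) (fun x1 x2 => x1 * exp (- x2)) (fun _ _ => 1) /\
      intertwines (mat 0 (-1) 1 0) G (Gamma0 1)).
Proof.
  intros Hi Hfl HG. apply flat_eqs in Hfl.
  rewrite HG in Hfl. unfold proj_mod in Hfl.
  destruct i as [|[|[|[|[|[|i]]]]]]; simpl in Hfl; destruct Hfl as [F1 [F2 F3]];
    [ | | | | | | exfalso; lia ].
  -
    left. assert (a1 = 0) by nra. assert (a2 = 0) by nra. try subst a1; try subst a2.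
    rewrite HG. unfold proj_mod; simpl. f_equal; ring.
  -
    assert (a2 = 0) by nra. subst a2.
    assert (a1 = 0 \/ a1 = -1) as [-> | ->].
    { assert (a1 * (1 + a1) = 0) by nra. apply Rmult_integral in H. destruct H; [left|right]; lra. }
    + left. rewrite HG. unfold proj_mod; simpl. f_equal; ring.
    + right; left. assert (HG' : G = G2) by (rewrite HG; unfold proj_mod, G2; simpl; f_equal; ring).
      rewrite HG'. split; [reflexivity | split; [apply Q_G2 |]].
      intros p q m. destruct p, q, m; unfold sumI, chr, mat, G2; simpl; ring.
  -
    assert (a1 * (1 - a1) = 0) by nra. assert (a2 * (1 + a2) = 0) by nra.
    apply Rmult_integral in H. apply Rmult_integral in H0.
    destruct H as [H | H]; destruct H0 as [H0 | H0].
    + left. assert (a1 = 0) by lra. assert (a2 = 0) by lra. try subst a1; try subst a2.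
      rewrite HG. unfold proj_mod; simpl. f_equal; ring.
    + assert (a1 = 0) by lra. assert (a2 = -1) by lra. try subst a1; try subst a2.
      right; right; right; left. assert (HG' : G = G4) by (rewrite HG; unfold proj_mod, G4; simpl; f_equal; ring).
      rewrite HG'. split; [reflexivity | split; [apply Q_G4 |]].
      intros p q m. destruct p, q, m; unfold sumI, chr, mat, G4; simpl; ring.
    + assert (a1 = 1) by lra. assert (a2 = 0) by lra. try subst a1; try subst a2.
      right; right; left. assert (HG' : G = G3) by (rewrite HG; unfold proj_mod, G3; simpl; f_equal; ring).
      rewrite HG'. split; [reflexivity | split; [apply Q_G3 |]].
      intros p q m. destruct p, q, m; unfold sumI, chr, mat, G3; simpl; ring.
    + exfalso. assert (a1 = 1) by lra. assert (a2 = -1) by lra. try subst a1; try subst a2. lra.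
  -
    assert (a1 = 0) by nra. subst a1.
    assert (a2 * (1 + a2) = 0) by nra. apply Rmult_integral in H. destruct H as [H | H].
    + left. try subst a1; try subst a2. rewrite HG. unfold proj_mod; simpl. f_equal; ring.
    + assert (a2 = -1) by lra. try subst a1; try subst a2.
      right; right; right; right. assert (HG' : G = G5) by (rewrite HG; unfold proj_mod, G5; simpl; f_equal; ring).
      rewrite HG'. split; [reflexivity | split; [apply Q_G5 |]].
      intros p q m. destruct p, q, m; unfold sumI, chr, mat, G5; simpl; ring.
  -
    left. assert (a1 = 0) by nra. subst a1. assert (a2 = 0) by nra. try subst a1; try subst a2.
    rewrite HG. unfold proj_mod; simpl. f_equal; ring.
  -
    left. assert (a1 * (1 + a1) = 0) by nra. apply Rmult_integral in H. destruct H as [H | H].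
    + subst a1. assert (a2 = 0) by nra. try subst a1; try subst a2. rewrite HG. unfold proj_mod; simpl. f_equal; ring.
    + exfalso. assert (a1 = -1) by lra. try subst a1; try subst a2. nra.
Qed.
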